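(* Assume $\lambda d(1-s^d_i)>\gamma$ for all $d,i$. For $x^*\in\mathcal{X}$, let $\Theta^*=\bar\Theta(x^* )>0$. Then $\partial H/\partial\Theta(\Theta^*,x^* )<0$, so there is an open neighborhood $N\subset\mathbb{R}^n$ of $x^*$ and a unique continuously differentiable $h:N\to(0,\infty)$ with $h(x^* )=\Theta^*$ and $H(h(y),y)=0$ for $y\in N$. Define $F^d_i(y)=s^d_i r-(1-s^d_i)\frac{\theta^d_i h(y)}{\gamma+\theta^d_i h(y)}$ on $N$. Then the game is submodular at $x^*$ in the sense that for all $d,c\in\{1,\dots,D\}$, all $k\in\{1,\dots,n^d-1\}$ and all $l\in\{1,\dots,n^c-1\}$, $$\frac{\partial F^d_{k+1}}{\partial x^c_{l+1}}(x^* )-\frac{\partial F^d_{k}}{\partial x^c_{l+1}}(x^* )-\frac{\partial F^d_{k+1}}{\partial x^c_{l}}(x^* )+\frac{\partial F^d_{k}}{\partial x^c_{l}}(x^* )\le 0,$$ i.e. $(\Sigma^d)^T DF^d_c(x^* )\Sigma^c\le0$ entrywise, where $DF^d_c=(\partial F^d_i/\partial x^c_j)_{i,j}\in\mathbb{R}^{n^d\times n^c}$ and $\Sigma^d\in\mathbb{R}^{n^d\times(n^d-1)}$ has columns $e_{k+1}-e_k$.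
   Context: Setting: $D\in\mathbb{N}_+$ populations indexed by degree $d\in\{1,\dots,D\}$, degree distribution $m^d\in(0,1]$, $\sum_d m^d=1$, $\bar d=\sum_d d\,m^d$. Population $d$ has strategies $0\le s^d_1<\dots<s^d_{n^d}\le1$ (strictly increasing), $n=\sum_d n^d$. A social state is $x=(x^d_i)$ with $x^d_i\ge0$, $\sum_i x^d_i=m^d$; $\mathcal{X}$ is the set of social states. Constants $\lambda>0,\gamma>0$, $\theta^d_i=\lambda d(1-s^d_i)$, relative reward $r<0$. Define $H:\mathbb{R}\times\mathbb{R}^n\to\mathbb{R}$ (where $\gamma+\theta^d_i\Theta\neq0$) by $H(\Theta,x)=\frac{1}{\bar d}\sum_d d\sum_i\frac{x^d_i\theta^d_i}{\gamma+\theta^d_i\Theta}-1$. For $x\in\mathcal{X}$, $\bar\Theta(x)$ denotes the unique $\Theta>0$ with $H(\Theta,x)=0$ (the link-infection probability at the positive steady state of the SI dynamics $\dot I^d_i=-\gamma I^d_i+\lambda(1-s^d_i)(1-I^d_i)d\Theta$, $\Theta=\bar d^{-1}\sum_d\sum_i dx^d_iI^d_i$), and the steady-state payoff is $F^d_i(x)=s^d_ir-(1-s^d_i)\frac{\theta^d_i\bar\Theta(x)}{\gamma+\theta^d_i\bar\Theta(x)}$. *)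

(* Defs.v *)
From HB Require Import structures.
From mathcomp Require Import all_boot all_order all_algebra.
From mathcomp Require Import all_classical all_reals all_analysis.
Set Implicit Arguments. Unset Strict Implicit. Unset Printing Implicit Defensive.
Import Order.TTheory GRing.Theory Num.Theory.
Import numFieldNormedType.Exports.
Local Open Scope classical_set_scope.
Local Open Scope ring_scope.

(* Populations are indexed by d : 'I_D, standing for degree d.+1 in {1,...,D}.
   Population d has nn d strategies, indexed by i : 'I_(nn d) (0-based). *)

Definition idx (D : nat) (nn : 'I_D -> nat) : finType := {d : 'I_D & 'I_(nn d)}.

Definition nS (D : nat) (nn : 'I_D -> nat) : nat := #|{: idx nn}|.

(* position in R^n of coordinate x^d_i *)
Definition pos (D : nat) (nn : 'I_D -> nat) (d : 'I_D) (i : 'I_(nn d)) : 'I_(nS nn) :=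
  enum_rank (Tagged (fun d => 'I_(nn d)) i : idx nn).

Definition xc (R : realType) (D : nat) (nn : 'I_D -> nat) (x : 'rV[R]_(nS nn))
  (d : 'I_D) (i : 'I_(nn d)) : R := x ord0 (pos i).

Definition ev (R : realType) (n : nat) (j : 'I_n) : 'rV[R]_n := delta_mx 0 j.

Definition deg (R : realType) (D : nat) (d : 'I_D) : R := (d.+1)%:R.

Definition dbar (R : realType) (D : nat) (m : 'I_D -> R) : R := \sum_d deg R d * m d.

Definition theta (R : realType) (D : nat) (nn : 'I_D -> nat)
  (lam : R) (s : forall d, 'I_(nn d) -> R) (d : 'I_D) (i : 'I_(nn d)) : R :=
  lam * deg R d * (1 - s d i).

Definition Hfun (R : realType) (D : nat) (nn : 'I_D -> nat) (m : 'I_D -> R)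
  (s : forall d, 'I_(nn d) -> R) (lam gam : R) (Th : R) (x : 'rV[R]_(nS nn)) : R :=
  (dbar m)^-1 * (\sum_d deg R d *
      \sum_(i < nn d) (xc x i * theta lam s i / (gam + theta lam s i * Th))) - 1.

Definition social_state (R : realType) (D : nat) (nn : 'I_D -> nat) (m : 'I_D -> R)
  (x : 'rV[R]_(nS nn)) : Prop :=
  (forall d (i : 'I_(nn d)), 0 <= xc x i) /\ (forall d, \sum_(i < nn d) xc x i = m d).

Definition C1_on (R : realType) (n : nat) (f : 'rV[R]_n -> R) (N : set 'rV[R]_n) : Prop :=
  forall j : 'I_n,
    (forall y, N y -> derivable f y (ev R j)) /\
    {within N, continuous (fun y => derive f y (ev R j))}.

Definition implicit_sol (R : realType) (D : nat) (nn : 'I_D -> nat) (m : 'I_D -> R)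
  (s : forall d, 'I_(nn d) -> R) (lam gam : R) (xs : 'rV[R]_(nS nn)) (Ths : R)
  (N : set 'rV[R]_(nS nn)) (h : 'rV[R]_(nS nn) -> R) : Prop :=
  [/\ open N, N xs, C1_on h N, h xs = Ths &
      forall y, N y -> 0 < h y /\ Hfun m s lam gam (h y) y = 0].

Definition Fpay (R : realType) (D : nat) (nn : 'I_D -> nat)
  (s : forall d, 'I_(nn d) -> R) (lam gam r : R) (h : 'rV[R]_(nS nn) -> R)
  (d : 'I_D) (i : 'I_(nn d)) (y : 'rV[R]_(nS nn)) : R :=
  s d i * r - (1 - s d i) * (theta lam s i * h y / (gam + theta lam s i * h y)).

(* Main.v *)
Require Import Defs.
From HB Require Import structures.
From mathcomp Require Import all_boot all_order all_algebra.
From mathcomp Require Import all_classical all_reals all_analysis.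
Import Order.TTheory GRing.Theory Num.Theory.
Import numFieldNormedType.Exports.
Local Open Scope classical_set_scope.
Local Open Scope ring_scope.
From mathcomp Require Import ring lra.

Module A2.
Set Implicit Arguments. Unset Strict Implicit. Unset Printing Implicit Defensive.

Lemma cvg_sum_fin (R : realType) {T} (F : set_system T) {FF : Filter F}
  (I : finType) (f : I -> T -> R) (a : I -> R) :
  (forall i, f i @ F --> a i) -> (fun x => \sum_i f i x) @ F --> \sum_i a i.
Proof.
move=> H.
suff: forall r : seq I, (fun x => \sum_(i <- r) f i x) @ F --> \sum_(i <- r) a i.
  by move=> /(_ (index_enum I)).
elim=> [|i r IH].
  rewrite big_nil (_ : (fun _ => _) = fun _ => 0); first exact: cvg_cst.
  by apply: funext => x; rewrite big_nil.
rewrite big_cons (_ : (fun _ => _) = (fun x => f i x + \sum_(j <- r) f j x)).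
  exact: cvgD.
by apply: funext => x; rewrite big_cons.
Qed.

Lemma coord_le (R : realType) n (v : 'rV[R]_n) j : `|v ord0 j| <= `|v|.
Proof.
have -> : `|v| = mx_norm v by [].
rewrite mx_normrE.
by apply: (le_bigmax _ (fun ij : 'I_1 * 'I_n => `|v ij.1 ij.2|) (ord0, j)).
Qed.

End A2.
Import A2.

Module B2.
Set Implicit Arguments. Unset Strict Implicit. Unset Printing Implicit Defensive.

Section Model.
Local Unset Implicit Arguments.
Variables (R : realType) (D : nat) (nn : 'I_D -> nat) (s : forall d, 'I_(nn d) -> R)
  (lam gam : R).
Hypotheses (lam0 : 0 < lam) (gam0 : 0 < gam) (s01 : forall (d : 'I_D) (i : 'I_(nn d)), 0 <= s d i <= 1).

Local Set Implicit Arguments.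
Local Notation vec := 'rV[R]_(nS nn).
Local Notation th d i := (@theta R D nn lam s d i).
Definition wt := forall d : 'I_D, 'I_(nn d) -> R.

Definition S (y : vec) (w : wt) : R :=
  \sum_d deg R d * \sum_(i < nn d) (xc y i * w d i).

Definition wG (T : R) : wt := fun d i => th d i / (gam + th d i * T).
Definition wQ (a b : R) : wt :=
  fun d i => th d i * th d i / ((gam + th d i * a) * (gam + th d i * b)).
Definition G (T : R) y := S y (wG T).
Definition Q a b y := S y (wQ a b).

Lemma deg_gt0 (d : 'I_D) : 0 < deg R d.
Proof. by rewrite /deg ltr0n. Qed.

Lemma th_ge0 d i : 0 <= th d i.
Proof.
rewrite /theta; apply: mulr_ge0; first by rewrite mulr_ge0 ?ltW ?deg_gt0.
by rewrite subr_ge0; case/andP: (s01 d i).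
Qed.

Lemma den_gt0 d i T : 0 <= T -> 0 < gam + th d i * T.
Proof. by move=> T0; rewrite ltr_pwDl // mulr_ge0 // th_ge0. Qed.

Lemma S_ext y w1 w2 : (forall d i, w1 d i = w2 d i) -> S y w1 = S y w2.
Proof.
move=> e; apply: eq_bigr => d _; congr (_ * _); apply: eq_bigr => i _.
by rewrite e.
Qed.

Lemma S_sub y w1 w2 : S y w1 - S y w2 = S y (fun d i => w1 d i - w2 d i).
Proof.
rewrite /S -sumrB; apply: eq_bigr => d _; rewrite -mulrBr -sumrB.
by congr (_ * _); apply: eq_bigr => i _; rewrite mulrBr.
Qed.

Lemma S_scal y c w : S y (fun d i => c * w d i) = c * S y w.
Proof.
rewrite /S mulr_sumr; apply: eq_bigr => d _; rewrite [RHS]mulrCA [in RHS]mulr_sumr.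
by congr (_ * _); apply: eq_bigr => i _; rewrite mulrCA.
Qed.

Lemma S_subl y z w : S (y - z) w = S y w - S z w.
Proof.
rewrite /S -sumrB; apply: eq_bigr => d _; rewrite -mulrBr -sumrB.
by congr (_ * _); apply: eq_bigr => i _; rewrite /xc !mxE mulrBl.
Qed.

Lemma S_scalv y (c : R) w : S (c *: y) w = c * S y w.
Proof.
rewrite /S mulr_sumr; apply: eq_bigr => d _; rewrite [RHS]mulrCA [in RHS]mulr_sumr.
by congr (_ * _); apply: eq_bigr => i _; rewrite /xc !mxE mulrA.
Qed.

Lemma S_addl y z w : S (y + z) w = S y w + S z w.
Proof.
rewrite /S -big_split; apply: eq_bigr => d _ /=; rewrite -mulrDr -big_split.
by congr (_ * _); apply: eq_bigr => i _; rewrite /xc !mxE mulrDl.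
Qed.

Definition S1 (w : wt) := \sum_d deg R d * \sum_(i < nn d) `|w d i|.

Lemma S1_ge0 w : 0 <= S1 w.
Proof.
apply: sumr_ge0 => d _; apply: mulr_ge0; first exact: ltW (deg_gt0 d).
by apply: sumr_ge0 => i _.
Qed.

Lemma S_bound y w : `|S y w| <= `|y| * S1 w.
Proof.
rewrite /S /S1 mulr_sumr; apply: (le_trans (ler_norm_sum _ _ _)).
apply: ler_sum => d _; rewrite normrM gtr0_norm ?deg_gt0 // mulrCA.
rewrite ler_pM2l ?deg_gt0 // mulr_sumr; apply: (le_trans (ler_norm_sum _ _ _)).
apply: ler_sum => i _; rewrite normrM ler_wpM2r //; exact: coord_le.
Qed.

Lemma S_ge0 y w : (forall (d : 'I_D) (i : 'I_(nn d)), 0 <= xc y i) ->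
  (forall d i, 0 <= w d i) -> 0 <= S y w.
Proof.
move=> hy hw; apply: sumr_ge0 => d _; apply: mulr_ge0; first exact: ltW (deg_gt0 d).
by apply: sumr_ge0 => i _; rewrite mulr_ge0.
Qed.

Lemma S_cvg {T} (F : set_system T) {FF : Filter F} (Y : T -> vec) (W : T -> wt) y w :
  Y @ F --> y -> (forall d i, (fun u => W u d i) @ F --> w d i) ->
  (fun u => S (Y u) (W u)) @ F --> S y w.
Proof.
move=> hY hW; apply: cvg_sum_fin => d; apply: cvgM; first exact: cvg_cst.
apply: cvg_sum_fin => i; apply: cvgM => //.
exact: (cvg_comp _ _ hY (@coord_continuous R 1 (nS nn) ord0 (pos i) y)).
Qed.

End Model.

End B2.
Import B2.

Module C2.
Set Implicit Arguments. Unset Strict Implicit. Unset Printing Implicit Defensive.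

Section Ident.
Local Unset Implicit Arguments.
Variables (R : realType) (D : nat) (nn : 'I_D -> nat) (s : forall d, 'I_(nn d) -> R)
  (lam gam : R).
Hypotheses (lam0 : 0 < lam) (gam0 : 0 < gam) (s01 : forall (d : 'I_D) (i : 'I_(nn d)), 0 <= s d i <= 1).
Local Set Implicit Arguments.
Local Notation vec := 'rV[R]_(nS nn).
Local Notation th d i := (@theta R D nn lam s d i).
Local Notation G := (@G R D nn s lam gam).
Local Notation Q := (@Q R D nn s lam gam).
Local Notation S := (@S R D nn).

Lemma Hfun_eq (m : 'I_D -> R) T y : Hfun m s lam gam T y = (dbar m)^-1 * G T y - 1.
Proof.
rewrite /Hfun /G /B2.S /wG; congr (_ * _ - _); apply: eq_bigr => d _; congr (_ * _).
by apply: eq_bigr => i _; rewrite mulrA.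
Qed.

Lemma G_diff a b y : 0 <= a -> 0 <= b -> G a y - G b y = (b - a) * Q a b y.
Proof.
move=> a0 b0; rewrite /G /Q S_sub -S_scal; apply: S_ext => d i.
have ha := den_gt0 lam0 gam0 s01 i a0; have hb := den_gt0 lam0 gam0 s01 i b0.
rewrite /wG /wQ; field.
by rewrite !gt_eqF.
Qed.


Lemma th_le (d : 'I_D) (i : 'I_(nn d)) : th d i <= lam * D%:R.
Proof.
rewrite /theta -[X in _ <= X]mulr1 ler_pM //.
- by rewrite mulr_ge0 ?ltW ?deg_gt0.
- by rewrite subr_ge0; case/andP: (s01 d i).
- by rewrite ler_pM2l // /deg ler_nat.
- by rewrite lerBlDr lerDl; case/andP: (s01 d i).
Qed.

Lemma wQ_ge0 a b (d : 'I_D) (i : 'I_(nn d)) : 0 <= a -> 0 <= b -> 0 <= wQ s lam gam a b i.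
Proof.
move=> a0 b0; have ha := den_gt0 lam0 gam0 s01 i a0; have hb := den_gt0 lam0 gam0 s01 i b0.
by apply: divr_ge0; apply: mulr_ge0; rewrite ?(th_ge0 lam0 s01) ?ltW.
Qed.

Lemma fac_le a (d d0 : 'I_D) (i : 'I_(nn d)) (i0 : 'I_(nn d0)) : 0 <= a -> 0 < th d0 i0 ->
  th d i / (gam + th d i * a) <= (1 + lam * D%:R / th d0 i0) * (th d0 i0 / (gam + th d0 i0 * a)).
Proof.
move=> a0 t0; have ha := den_gt0 lam0 gam0 s01 i a0; have hb := den_gt0 lam0 gam0 s01 i0 a0.
have -> : (1 + lam * D%:R / th d0 i0) * (th d0 i0 / (gam + th d0 i0 * a)) =
  (th d0 i0 + lam * D%:R) / (gam + th d0 i0 * a).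
  by field; rewrite !gt_eqF.
rewrite ler_pdivrMr // mulrAC ler_pdivlMr //.
have h1 := th_le i; have h2 := th_ge0 lam0 s01 i.
have h3 : 0 <= lam * D%:R by apply: mulr_ge0; [exact: ltW|exact: ler0n].
have p1 : 0 <= (lam * D%:R - th d i) * gam by apply: mulr_ge0; [rewrite subr_ge0|exact: ltW].
have p2 : 0 <= th d0 i0 * gam by apply: mulr_ge0; [exact: ltW|exact: ltW].
have p3 : 0 <= lam * D%:R * th d i * a by apply: mulr_ge0 => //; exact: mulr_ge0.
nra.
Qed.

Lemma wQ_le a b (d d0 : 'I_D) (i : 'I_(nn d)) (i0 : 'I_(nn d0)) : 0 <= a -> 0 <= b -> 0 < th d0 i0 ->
  wQ s lam gam a b i <= (1 + lam * D%:R / th d0 i0) ^+ 2 * wQ s lam gam a b i0.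
Proof.
move=> a0 b0 t0.
have md : forall x y z t : R, x * z / (y * t) = (x / y) * (z / t).
  by move=> x y z t; rewrite mulf_div.
have fa := @fac_le a d d0 i i0 a0 t0; have fb := @fac_le b d d0 i i0 b0 t0.
move: fa fb; set K := (1 + lam * D%:R / th d0 i0) => fa fb.
rewrite /wQ !md expr2 [leRHS]mulrACA; apply: ler_pM => //.
- exact: (divr_ge0 (th_ge0 lam0 s01 i) (ltW (den_gt0 lam0 gam0 s01 i a0))).
- exact: (divr_ge0 (th_ge0 lam0 s01 i) (ltW (den_gt0 lam0 gam0 s01 i b0))).
Qed.

End Ident.

End C2.
Import C2.

Module D2.
Set Implicit Arguments. Unset Strict Implicit. Unset Printing Implicit Defensive.

Section Bounds.
Local Unset Implicit Arguments.
Variables (R : realType) (D : nat) (nn : 'I_D -> nat) (s : forall d, 'I_(nn d) -> R)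
  (lam gam : R).
Hypotheses (lam0 : 0 < lam) (gam0 : 0 < gam) (s01 : forall (d : 'I_D) (i : 'I_(nn d)), 0 <= s d i <= 1).
Variables (xs : 'rV[R]_(nS nn)) (d0 : 'I_D) (i0 : 'I_(nn d0)).
Hypotheses (xs0 : forall (d : 'I_D) (i : 'I_(nn d)), 0 <= xc xs i)
  (hx0 : 0 < xc xs i0) (ht0 : 0 < @theta R D nn lam s d0 i0).
Local Notation vec := 'rV[R]_(nS nn).
Local Notation th d i := (@theta R D nn lam s d i).
Local Notation G := (@G R D nn s lam gam).
Local Notation Q := (@Q R D nn s lam gam).
Local Notation S := (@S R D nn).
Local Notation wq a b d i := (@B2.wQ R D nn s lam gam a b d i).


Lemma S_single (y : vec) (w : wt R nn) :
  (forall (d : 'I_D) (i : 'I_(nn d)), 0 <= xc y i * w d i) ->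
  deg R d0 * (xc y i0 * w d0 i0) <= S y w.
Proof.
move=> h; rewrite /S (bigD1 d0) //= -[leLHS]addr0; apply: lerD.
  rewrite ler_pM2l ?deg_gt0 // (bigD1 i0) //= -[leLHS]addr0; apply: lerD => //.
  by apply: sumr_ge0 => i _.
apply: sumr_ge0 => d _; apply: mulr_ge0; first exact: ltW (deg_gt0 _ d).
by apply: sumr_ge0 => i _.
Qed.

Definition Kc := 1 + lam * D%:R / th d0 i0.
Definition Cn := \sum_d deg R d * (nn d)%:R.
Definition c0 := deg R d0 * xc xs i0.

Lemma c0_gt0 : 0 < c0.
Proof. by rewrite /c0 mulr_gt0 // deg_gt0. Qed.

Lemma Cn_ge0 : 0 <= Cn.
Proof. by apply: sumr_ge0 => d _; apply: mulr_ge0; [exact: ltW (deg_gt0 _ d)|exact: ler0n]. Qed.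

Lemma Kc_gt0 : 0 < Kc.
Proof.
have h : 0 <= lam * D%:R / th d0 i0 :=
  divr_ge0 (mulr_ge0 (ltW lam0) (ler0n _ _)) (ltW ht0).
rewrite /Kc; lra.
Qed.

Lemma S1_wQ a b : 0 <= a -> 0 <= b ->
  S1 (B2.wQ s lam gam a b) <= Kc ^+ 2 * wq a b d0 i0 * Cn.
Proof.
move=> a0 b0; rewrite /S1 /Cn mulr_sumr; apply: ler_sum => d _.
rewrite mulrCA ler_pM2l ?deg_gt0 //.
apply: (@le_trans _ _ (\sum_(i < nn d) Kc ^+ 2 * wq a b d0 i0)).
  apply: ler_sum => i _; rewrite ger0_norm; last exact: wQ_ge0.
  exact: wQ_le.
by rewrite sumr_const card_ord mulr_natr.
Qed.

Lemma Q_lb a b (y : vec) : 0 <= a -> 0 <= b ->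
  `|y - xs| * (Kc ^+ 2 * Cn) <= c0 / 2 ->
  wq a b d0 i0 * (c0 / 2) <= Q a b y.
Proof.
move=> a0 b0 hy.
have w0 : 0 <= wq a b d0 i0 by exact: wQ_ge0.
have -> : Q a b y = S xs (B2.wQ s lam gam a b) + S (y - xs) (B2.wQ s lam gam a b).
  by rewrite /Q S_subl addrC subrK.
have h1 : c0 * wq a b d0 i0 <= S xs (B2.wQ s lam gam a b).
  rewrite /c0 -mulrA; apply: S_single => d i; apply: mulr_ge0 => //; exact: wQ_ge0.
have h2 := S_bound (y - xs) (B2.wQ s lam gam a b).
have h3 := S1_wQ a b a0 b0.
have h4 : `|y - xs| * S1 (B2.wQ s lam gam a b) <= c0 / 2 * wq a b d0 i0.
  apply: (le_trans (ler_wpM2l (normr_ge0 _) h3)).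
  have e : `|y - xs| * (Kc ^+ 2 * wq a b d0 i0 * Cn) =
    (`|y - xs| * (Kc ^+ 2 * Cn)) * wq a b d0 i0 by ring.
  by rewrite e ler_wpM2r.
have h5 := ler_norm (- S (y - xs) (B2.wQ s lam gam a b)).
rewrite normrN in h5.
have c0p := c0_gt0.
lra.
Qed.

Lemma Q_pos a b (y : vec) : 0 <= a -> 0 <= b ->
  `|y - xs| * (Kc ^+ 2 * Cn) <= c0 / 2 -> 0 < Q a b y.
Proof.
move=> a0 b0 hy; apply: (lt_le_trans _ (Q_lb a b y a0 b0 hy)).
have ha := den_gt0 lam0 gam0 s01 i0 a0; have hb := den_gt0 lam0 gam0 s01 i0 b0.
apply: mulr_gt0; last by apply: divr_gt0; [exact: c0_gt0|].
exact: (divr_gt0 (mulr_gt0 ht0 ht0) (mulr_gt0 ha hb)).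
Qed.

End Bounds.

End D2.
Import D2.

Module E2.
Set Implicit Arguments. Unset Strict Implicit. Unset Printing Implicit Defensive.

Lemma deriv_quot (R : realType) (V : normedModType R) (f : V -> R) a v (k : R -> R) l :
  (\forall t \near 0^', t^-1 *: ((f \o shift a) (t *: v) - f a) = k t) ->
  k @ 0^' --> l -> derivable f a v /\ derive f a v = l.
Proof.
move=> hk hl.
have hq : (fun t => t^-1 *: ((f \o shift a) (t *: v) - f a)) @ 0^' --> l.
  apply: cvg_trans hl; apply: near_eq_cvg; near=> t; by rewrite (near hk t).
split; first by apply/cvg_ex; exists l.
exact: cvg_lim.
Unshelve. all: by end_near.
Qed.

Lemma line_cvg (R : realType) (V : normedModType R) (a v : V) :
  (fun t : R => t *: v + a) @ 0^' --> a.
Proof.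
apply: cvg_within_filter.
have h : (fun t : R => t *: v + a) @ (0 : R) --> (0 : R) *: v + a.
  apply: cvgD; last exact: cvg_cst.
  apply: cvgZ; [exact: cvg_id | exact: cvg_cst].
by rewrite scale0r add0r in h.
Qed.

Section Conv.
Local Unset Implicit Arguments.
Variables (R : realType) (D : nat) (nn : 'I_D -> nat) (s : forall d, 'I_(nn d) -> R)
  (lam gam : R).
Hypotheses (lam0 : 0 < lam) (gam0 : 0 < gam) (s01 : forall (d : 'I_D) (i : 'I_(nn d)), 0 <= s d i <= 1).
Local Notation vec := 'rV[R]_(nS nn).
Local Notation th d i := (@theta R D nn lam s d i).
Local Notation G := (@G R D nn s lam gam).
Local Notation Q := (@Q R D nn s lam gam).
Local Notation S := (@S R D nn).

Lemma inv_den_cvg {U} (F : set_system U) {FF : Filter F} (f : U -> R) T (d : 'I_D) (i : 'I_(nn d)) :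
  f @ F --> T -> 0 <= T -> (fun u => (gam + th d i * f u)^-1) @ F --> (gam + th d i * T)^-1.
Proof.
move=> hf T0; apply: cvgV; first by rewrite gt_eqF // den_gt0.
apply: cvgD; first exact: cvg_cst.
apply: cvgM; [exact: cvg_cst | exact: hf].
Qed.

Lemma wG_cvg {U} (F : set_system U) {FF : Filter F} (f : U -> R) T (d : 'I_D) (i : 'I_(nn d)) :
  f @ F --> T -> 0 <= T -> (fun u => wG s lam gam (f u) i) @ F --> wG s lam gam T i.
Proof.
move=> hf T0; apply: cvgM; [exact: cvg_cst | exact: inv_den_cvg].
Qed.

Lemma wQ_cvg {U} (F : set_system U) {FF : Filter F} (f g : U -> R) a b (d : 'I_D) (i : 'I_(nn d)) :
  f @ F --> a -> g @ F --> b -> 0 <= a -> 0 <= b ->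
  (fun u => wQ s lam gam (f u) (g u) i) @ F --> wQ s lam gam a b i.
Proof.
move=> hf hg a0 b0; rewrite /wQ.
have e : forall x y : R, th d i * th d i / ((gam + th d i * x) * (gam + th d i * y)) =
  th d i * th d i * ((gam + th d i * x)^-1 * (gam + th d i * y)^-1).
  by move=> x y; rewrite invfM.
rewrite e (_ : (fun u => _) = fun u => th d i * th d i *
   ((gam + th d i * f u)^-1 * (gam + th d i * g u)^-1)); last first.
  by apply: funext => u; rewrite e.
apply: cvgM; first exact: cvg_cst.
apply: cvgM; exact: inv_den_cvg.
Qed.

Lemma G_cvgT {U} (F : set_system U) {FF : Filter F} (f : U -> R) T (y : vec) :
  f @ F --> T -> 0 <= T -> (fun u => G (f u) y) @ F --> G T y.
Proof.
move=> hf T0; apply: (@S_cvg R D nn U F FF (fun=> y) (fun u => wG s lam gam (f u))); first exact: cvg_cst.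
by move=> d i; exact: wG_cvg.
Qed.

Lemma Q_cvg {U} (F : set_system U) {FF : Filter F} (f g : U -> R) (Y : U -> vec) a b y :
  f @ F --> a -> g @ F --> b -> Y @ F --> y -> 0 <= a -> 0 <= b ->
  (fun u => Q (f u) (g u) (Y u)) @ F --> Q a b y.
Proof.
move=> hf hg hY a0 b0; apply: (@S_cvg R D nn U F FF Y (fun u => wQ s lam gam (f u) (g u))) => //.
by move=> d i; exact: wQ_cvg.
Qed.

Lemma L_cvg {U} (F : set_system U) {FF : Filter F} (f : U -> R) (Y : U -> vec) T y :
  f @ F --> T -> Y @ F --> y -> 0 <= T ->
  (fun u => G (f u) (Y u)) @ F --> G T y.
Proof.
move=> hf hY T0; apply: (@S_cvg R D nn U F FF Y (fun u => wG s lam gam (f u))) => //.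
by move=> d i; exact: wG_cvg.
Qed.

End Conv.

End E2.
Import E2.

Module F2.
Set Implicit Arguments. Unset Strict Implicit. Unset Printing Implicit Defensive.

Section Sol.
Local Unset Implicit Arguments.
Variables (R : realType) (D : nat) (nn : 'I_D -> nat) (s : forall d, 'I_(nn d) -> R)
  (lam gam : R).
Hypotheses (lam0 : 0 < lam) (gam0 : 0 < gam) (s01 : forall (d : 'I_D) (i : 'I_(nn d)), 0 <= s d i <= 1).
Local Notation vec := 'rV[R]_(nS nn).
Local Notation th d i := (@theta R D nn lam s d i).
Local Notation G := (@G R D nn s lam gam).
Local Notation Q := (@Q R D nn s lam gam).
Local Notation S := (@S R D nn).

Lemma quot_id (h : vec -> R) (y z : vec) :
  0 <= h y -> 0 <= h z -> G (h z) z = G (h y) y ->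
  (h z - h y) * Q (h z) (h y) z = G (h y) (z - y).
Proof.
move=> hy hz e.
have e1 := G_diff lam0 gam0 s01 z hz hy.
have e2 : G (h y) (z - y) = G (h y) z - G (h y) y by rewrite /B2.G S_subl.
rewrite e2; rewrite -e in e1 *.
have -> : h z - h y = - (h y - h z) by rewrite opprB.
by rewrite mulNr -e1 opprB.
Qed.

Variables (N : set vec) (h : vec -> R) (c : R).
Hypotheses (oN : open N) (hN : forall y, N y -> 0 < h y /\ G (h y) y = c)
  (QN : forall y a b, N y -> 0 <= a -> 0 <= b -> 0 < Q a b y).

Lemma h_deriv (y v : vec) : N y ->
  (fun t : R => h (t *: v + y)) @ 0^' --> h y ->
  derivable h y v /\ derive h y v = G (h y) v / Q (h y) (h y) y.
Proof.
move=> Ny hc.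
have Nl : \forall t \near (0:R)^', N (t *: v + y).
  have := @line_cvg R _ y v; move/(_ N); apply.
  by apply: open_nbhs_nbhs; split.
apply: (deriv_quot (k := fun t => G (h y) v / Q (h (t *: v + y)) (h y) (t *: v + y))).
  near=> t.
  have Nt : N (t *: v + y) by exact: (near Nl t).
  have t0 : t != 0 by exact: (near (nbhs_dnbhs_neq 0) t).
  have [hy1 hy2] := hN y Ny; have [ht1 ht2] := hN _ Nt.
  have q0 := QN _ _ _ Nt (ltW ht1) (ltW hy1).
  have := quot_id h y (t *: v + y) (ltW hy1) (ltW ht1) (etrans ht2 (esym hy2)).
  rewrite addrK /B2.G S_scalv -/(B2.G s lam gam (h y) v) => e.
  rewrite /= /shift -[G (h y) v](mulKf t0) -e mulrA mulfK ?gt_eqF //.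
apply: cvgM; first exact: cvg_cst.
have [hy1 _] := hN y Ny.
apply: cvgV; first by rewrite gt_eqF // QN // ltW.
apply: Q_cvg => //; try exact: ltW.
- exact: cvg_cst.
- exact: (@line_cvg R _ y v).
Unshelve. all: by end_near.
Qed.

End Sol.

End F2.
Import F2.

Module G2.
Set Implicit Arguments. Unset Strict Implicit. Unset Printing Implicit Defensive.

Lemma deriv_line (R : realType) (V : normedModType R) (f : V -> R) y v :
  derivable f y v -> (fun t : R => f (t *: v + y)) @ 0^' --> f y.
Proof.
move=> /cvg_ex [l hl].
have e : \forall t \near (0:R)^', f y + t * (t^-1 *: ((f \o shift y) (t *: v) - f y)) = f (t *: v + y).
  near=> t.
  have t0 : t != 0 by exact: (near (nbhs_dnbhs_neq 0) t).
  by rewrite /= /shift -[_ *: _]/(t^-1 * _) mulrA mulfV // mul1r addrC subrK.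
apply: cvg_trans (near_eq_cvg e) _.
have h2 : (fun t : R => f y + t * (t^-1 *: ((f \o shift y) (t *: v) - f y))) @ 0^' --> f y + 0 * l.
  apply: cvgD; first exact: cvg_cst.
  apply: cvgM => //; apply: cvg_within_filter; exact: cvg_id.
by rewrite mul0r addr0 in h2.
Unshelve. all: by end_near.
Qed.

Section FD.
Local Unset Implicit Arguments.
Variables (R : realType) (D : nat) (nn : 'I_D -> nat) (s : forall d, 'I_(nn d) -> R)
  (lam gam r : R).
Hypotheses (lam0 : 0 < lam) (gam0 : 0 < gam) (s01 : forall (d : 'I_D) (i : 'I_(nn d)), 0 <= s d i <= 1).
Local Notation vec := 'rV[R]_(nS nn).
Local Notation th d i := (@theta R D nn lam s d i).

Lemma F_deriv (N : set vec) (h : vec -> R) (oN : open N) (hpos : forall z, N z -> 0 <= h z)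
  (y v : vec) (Ny : N y) (hd : derivable h y v) (d : 'I_D) (k : 'I_(nn d)) :
  derive (Fpay s lam gam r h k) y v =
  - (1 - s d k) * (th d k * gam * ((gam + th d k * h y)^-1 * (gam + th d k * h y)^-1))
   * derive h y v.
Proof.
have Nl : \forall t \near (0:R)^', N (t *: v + y).
  have := @line_cvg R _ y v; move/(_ N); apply.
  by apply: open_nbhs_nbhs; split.
have hl := deriv_line hd.
have hy0 := hpos y Ny.
set kk := fun t : R => - (1 - s d k) * (th d k * gam * ((gam + th d k * h (t *: v + y))^-1
     * (gam + th d k * h y)^-1)) * (t^-1 *: ((h \o shift y) (t *: v) - h y)).
have hq : \forall t \near (0:R)^', t^-1 *: ((Fpay s lam gam r h k \o shift y) (t *: v)
   - Fpay s lam gam r h k y) = kk t.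
  near=> t.
  have Nt : N (t *: v + y) by exact: (near Nl t).
  have t0 : t != 0 by exact: (near (nbhs_dnbhs_neq 0) t).
  have ht0 := hpos _ Nt.
  have da := den_gt0 lam0 gam0 s01 k ht0; have db := den_gt0 lam0 gam0 s01 k hy0.
  rewrite /kk /Fpay /= /shift.
  have sm : forall a b : R, a *: b = a * b by [].
  rewrite !sm.
  move: da db; set a := h (t *: v + y); set b := h y => da db.
  field.
  by rewrite t0 !gt_eqF.
have hc : kk @ 0^' --> - (1 - s d k) * (th d k * gam * ((gam + th d k * h y)^-1 *
   (gam + th d k * h y)^-1)) * derive h y v.
  apply: cvgM; last exact: hd.
  apply: cvgM; first exact: cvg_cst.
  apply: cvgM; first exact: cvg_cst.
  apply: cvgM; last exact: cvg_cst.
  exact: inv_den_cvg.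
by have [_ ->] := deriv_quot hq hc.
Unshelve. all: by end_near.
Qed.

End FD.

End G2.
Import G2.

Module H2.
Set Implicit Arguments. Unset Strict Implicit. Unset Printing Implicit Defensive.

Lemma lip_cvg (R : realType) (V : normedModType R) (f : V -> R) y C : 0 <= C ->
  (\forall z \near y, `|f z - f y| <= C * `|z - y|) -> f @ y --> f y.
Proof.
move=> C0 hl; apply/cvgrPdist_le => e e0.
have hb : \forall z \near y, `|y - z| <= e / (C + 1).
  have := (@cvg_id _ (nbhs y)); move/cvgrPdist_le; apply.
  by apply: divr_gt0 => //; lra.
near=> z.
have h1 : `|f z - f y| <= C * `|z - y| by exact: (near hl z).
have h2 : `|y - z| <= e / (C + 1) by exact: (near hb z).
rewrite distrC; apply: (le_trans h1).
apply: (@le_trans _ _ (C * (e / (C + 1)))).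
  by rewrite ler_wpM2l // distrC.
rewrite mulrA ler_pdivrMr; last lra.
nra.
Unshelve. all: by end_near.
Qed.

Lemma frac_anti (R : realType) (t X X' : R) : 0 < X -> X <= X' -> t * t / X' <= t * t / X.
Proof.
move=> X0 XX; have X0' := lt_le_trans X0 XX.
have tt : 0 <= t * t by rewrite -expr2 sqr_ge0.
rewrite ler_pdivrMr // mulrAC ler_pdivlMr //.
by rewrite ler_wpM2l.
Qed.

Section Exist.
Local Unset Implicit Arguments.
Variables (R : realType) (D : nat) (nn : 'I_D -> nat) (s : forall d, 'I_(nn d) -> R)
  (lam gam : R).
Hypotheses (lam0 : 0 < lam) (gam0 : 0 < gam) (s01 : forall (d : 'I_D) (i : 'I_(nn d)), 0 <= s d i <= 1).
Variables (xs : 'rV[R]_(nS nn)) (d0 : 'I_D) (i0 : 'I_(nn d0)) (Ths : R).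
Hypotheses (xs0 : forall (d : 'I_D) (i : 'I_(nn d)), 0 <= xc xs i)
  (hx0 : 0 < xc xs i0) (ht0 : 0 < @theta R D nn lam s d0 i0) (Ths0 : 0 < Ths).
Local Notation vec := 'rV[R]_(nS nn).
Local Notation th d i := (@theta R D nn lam s d i).
Local Notation G := (@G R D nn s lam gam).
Local Notation Q := (@Q R D nn s lam gam).
Local Notation S := (@S R D nn).
Local Notation wq a b d i := (@B2.wQ R D nn s lam gam a b d i).
Local Notation Kc := (@Kc R D nn s lam d0 i0).
Local Notation Cn := (@Cn R D nn).
Local Notation c0 := (@c0 R D nn xs d0 i0).

Definition cc := G Ths xs.
Definition MM := Ths *+ 2.
Definition PP := Ths * wq MM Ths d0 i0 * (c0 / 2).
Definition rho := Num.min (c0 / 2 / (Kc ^+ 2 * Cn + 1)) (PP / (S1 (wG s lam gam Ths) + 1)).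

Lemma wq_gt0 a b : 0 <= a -> 0 <= b -> 0 < wq a b d0 i0.
Proof.
move=> a0 b0; have ha := den_gt0 lam0 gam0 s01 i0 a0; have hb := den_gt0 lam0 gam0 s01 i0 b0.
exact: (divr_gt0 (mulr_gt0 ht0 ht0) (mulr_gt0 ha hb)).
Qed.

Lemma wq_anti a b a' b' : 0 <= a -> a <= a' -> 0 <= b -> b <= b' ->
  wq a' b' d0 i0 <= wq a b d0 i0.
Proof.
move=> a0 aa b0 bb.
have ha := den_gt0 lam0 gam0 s01 i0 a0; have hb := den_gt0 lam0 gam0 s01 i0 b0.
have ha' := den_gt0 lam0 gam0 s01 i0 (le_trans a0 aa).
have hb' := den_gt0 lam0 gam0 s01 i0 (le_trans b0 bb).
have hX : 0 < (gam + th d0 i0 * a) * (gam + th d0 i0 * b) by rewrite mulr_gt0.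
have hX' : 0 < (gam + th d0 i0 * a') * (gam + th d0 i0 * b') by rewrite mulr_gt0.
rewrite /B2.wQ; apply: frac_anti => //.
apply: ler_pM; try exact: ltW.
  by rewrite lerD2l ler_wpM2l // ltW.
by rewrite lerD2l ler_wpM2l // ltW.
Qed.

Lemma c0_pos : 0 < c0.
Proof. exact: c0_gt0. Qed.

Lemma PP_gt0 : 0 < PP.
Proof.
have hM : 0 <= MM by rewrite /MM mulrn_wge0 // ltW.
have hw := wq_gt0 MM Ths hM (ltW Ths0).
have hc := c0_pos.
rewrite /PP; apply: mulr_gt0; first exact: mulr_gt0.
by apply: divr_gt0.
Qed.

Lemma rho_gt0 : 0 < rho.
Proof.
have h1 : 0 <= Kc ^+ 2 * Cn by rewrite mulr_ge0 ?exprn_ge0 ?Cn_ge0 // ltW // Kc_gt0.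
rewrite /rho lt_min; apply/andP; split.
  by rewrite divr_gt0 ?divr_gt0 ?c0_pos // ltr_pwDr.
by rewrite divr_gt0 ?PP_gt0 // ltr_pwDr // S1_ge0.
Qed.

Definition Nb := ball xs rho.

Lemma Nb_norm y : Nb y -> `|y - xs| < rho.
Proof. by rewrite /Nb -ball_normE /= distrC. Qed.

Lemma Nb_Q y : Nb y -> `|y - xs| * (Kc ^+ 2 * Cn) <= c0 / 2.
Proof.
move=> /Nb_norm hy.
have h1 : 0 <= Kc ^+ 2 * Cn by rewrite mulr_ge0 ?exprn_ge0 ?Cn_ge0 // ltW // Kc_gt0.
have hr : rho <= c0 / 2 / (Kc ^+ 2 * Cn + 1) by rewrite /rho ge_min lexx.
apply: (@le_trans _ _ (c0 / 2 / (Kc ^+ 2 * Cn + 1) * (Kc ^+ 2 * Cn))).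
  by rewrite ler_wpM2r // ltW // (lt_le_trans hy hr).
rewrite mulrAC ler_pdivrMr ?ltr_pwDr // ler_wpM2l ?lerDl //.
by rewrite divr_ge0 // ltW // c0_pos.
Qed.

Lemma Nb_P y : Nb y -> `|y - xs| * S1 (wG s lam gam Ths) < PP.
Proof.
move=> /Nb_norm hy.
have h1 := S1_ge0 (wG s lam gam Ths).
have hr : rho <= PP / (S1 (wG s lam gam Ths) + 1) by rewrite /rho ge_min lexx orbT.
apply: (@le_lt_trans _ _ (PP / (S1 (wG s lam gam Ths) + 1) * S1 (wG s lam gam Ths))).
  by rewrite ler_wpM2r // ltW // (lt_le_trans hy hr).
rewrite mulrAC ltr_pdivrMr ?ltr_pwDr // ltr_pM2l ?PP_gt0 //.
by rewrite ltrDl.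
Qed.

Lemma Nb_Qpos y a b : Nb y -> 0 <= a -> 0 <= b -> 0 < Q a b y.
Proof. by move=> /Nb_Q hy a0 b0; exact: (Q_pos _ _ _ _ _ _ lam0 gam0 s01 _ _ _ xs0 hx0 ht0 a b y a0 b0 hy). Qed.

Lemma Nb_uniq y a b : Nb y -> 0 <= a -> 0 <= b -> G a y = G b y -> a = b.
Proof.
move=> Ny a0 b0 e; have := G_diff lam0 gam0 s01 y a0 b0; rewrite e subrr.
move/esym/eqP; rewrite mulf_eq0 subr_eq0 => /orP[/eqP -> //|].
by rewrite gt_eqF // Nb_Qpos.
Qed.


Lemma exists_root y : Nb y -> exists T, [/\ 0 < T, T <= MM & G T y = cc].
Proof.
move=> Ny.
have hM : 0 <= MM by rewrite /MM mulrn_wge0 // ltW.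
have T0 := ltW Ths0.
have eL := G_diff lam0 gam0 s01 y (lexx 0) T0.
have eM := G_diff lam0 gam0 s01 y hM T0.
have eS : G Ths y - cc = G Ths (y - xs) by rewrite /cc /B2.G S_subl.
have hb : `|G Ths (y - xs)| <= `|y - xs| * S1 (wG s lam gam Ths) := S_bound (y - xs) (wG s lam gam Ths).
have hP := Nb_P y Ny.
have hQ := Nb_Q y Ny.
have q0 := Q_lb _ _ _ _ _ _ lam0 gam0 s01 _ _ _ xs0 hx0 ht0 0 Ths y (lexx 0) T0 hQ.
have qM := Q_lb _ _ _ _ _ _ lam0 gam0 s01 _ _ _ xs0 hx0 ht0 MM Ths y hM T0 hQ.
have wa : wq MM Ths d0 i0 <= wq 0 Ths d0 i0 := wq_anti 0 Ths MM Ths (lexx 0) hM T0 (lexx Ths).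
have c0p := c0_pos.
have hPP : PP = Ths * (wq MM Ths d0 i0 * (c0 / 2)) by rewrite /PP -mulrA.
have hw : Ths * (wq MM Ths d0 i0 * (c0 / 2)) <= Ths * (wq 0 Ths d0 i0 * (c0 / 2)).
  by rewrite ler_wpM2l // ler_wpM2r // divr_ge0 // ltW.
have hQ0 : Ths * (wq 0 Ths d0 i0 * (c0 / 2)) <= Ths * Q 0 Ths y by rewrite ler_wpM2l.
have hQM : Ths * (wq MM Ths d0 i0 * (c0 / 2)) <= Ths * Q MM Ths y by rewrite ler_wpM2l.
have hab := ler_norm (G Ths (y - xs)); have hab' := ler_norm (- G Ths (y - xs)).
rewrite normrN in hab'.
have eMM : Ths - MM = - Ths by rewrite /MM mulr2n opprD addrA subrr add0r.
rewrite eMM in eM; rewrite subr0 in eL.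
have g0 : cc < G 0 y by lra.
have gM : G MM y < cc by lra.
have [T hT eT] : exists2 T, T \in `[0, MM] & G T y = cc.
  apply: IVT => //.
    apply: continuous_in_subspaceT => x /set_mem; rewrite /= in_itv /= => /andP[x0 _].
    exact: (@G_cvgT _ _ _ _ _ _ lam0 gam0 s01 _ (nbhs x) _ id x y cvg_id x0).
  apply/andP; split; [rewrite ge_min; apply/orP; right; exact: ltW | rewrite le_max; apply/orP; left; exact: ltW].
exists T; split => //.
- rewrite in_itv /= in hT; case/andP: hT => hT _; rewrite lt_neqAle hT andbT.
  by apply/eqP => e; rewrite -e in eT; rewrite eT ltxx in g0.
- by rewrite in_itv /= in hT; case/andP: hT.
Qed.

Definition hh (y : vec) : R := xget Ths [set T | 0 < T /\ G T y = cc].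

Lemma hh_prop y : Nb y -> [/\ 0 < hh y, hh y <= MM & G (hh y) y = cc].
Proof.
move=> Ny; have [T [T0 TM eT]] := exists_root y Ny.
have [h0 he] : 0 < hh y /\ G (hh y) y = cc.
  by apply: (@xgetPex _ Ths [set T | 0 < T /\ G T y = cc]); exists T.
have -> : hh y = T by apply: (Nb_uniq y (hh y) T Ny (ltW h0) (ltW T0)); rewrite he eT.
by split.
Qed.

Lemma Nb_xs : Nb xs.
Proof. exact: ballxx rho_gt0. Qed.

Lemma hh_xs : hh xs = Ths.
Proof.
have [h0 _ he] := hh_prop xs Nb_xs.
by apply: (Nb_uniq xs (hh xs) Ths Nb_xs (ltW h0) (ltW Ths0)); rewrite he.
Qed.

Definition q0 := wq MM MM d0 i0 * (c0 / 2).

Lemma hh_lip y z : Nb y -> Nb z ->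
  `|hh z - hh y| <= S1 (wG s lam gam (hh y)) / q0 * `|z - y|.
Proof.
move=> Ny Nz.
have [hy0 hyM hye] := hh_prop y Ny; have [hz0 hzM hze] := hh_prop z Nz.
have e := quot_id _ _ _ _ _ _ lam0 gam0 s01 hh y z (ltW hy0) (ltW hz0) (etrans hze (esym hye)).
have hb : `|G (hh y) (z - y)| <= `|z - y| * S1 (wG s lam gam (hh y)) :=
  S_bound (z - y) (wG s lam gam (hh y)).
have hM : 0 <= MM by rewrite /MM mulrn_wge0 // ltW.
have hq := Q_lb _ _ _ _ _ _ lam0 gam0 s01 _ _ _ xs0 hx0 ht0 (hh z) (hh y) z (ltW hz0) (ltW hy0) (Nb_Q z Nz).
have wa := wq_anti (hh z) (hh y) MM MM (ltW hz0) hzM (ltW hy0) hyM.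
have c0p := c0_pos.
have q0p : 0 < q0 by apply: mulr_gt0; [exact: (wq_gt0 MM MM hM hM)| exact: divr_gt0].
have hq' : q0 <= Q (hh z) (hh y) z.
  apply: le_trans hq; rewrite /q0 ler_wpM2r // divr_ge0 // ltW //.
have Qp : 0 < Q (hh z) (hh y) z := lt_le_trans q0p hq'.
rewrite mulrAC ler_pdivlMr //.
apply: (@le_trans _ _ (`|hh z - hh y| * Q (hh z) (hh y) z)).
  by rewrite ler_wpM2l.
by rewrite -(gtr0_norm Qp) -normrM e mulrC.
Qed.

Lemma hh_cont y : Nb y -> hh @ y --> hh y.
Proof.
move=> Ny; apply: (lip_cvg (C := S1 (wG s lam gam (hh y)) / q0)).
  have c0p := c0_pos.
  have hM : 0 <= MM by rewrite /MM mulrn_wge0 // ltW.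
  have q0p : 0 < q0 by apply: mulr_gt0; [exact: (wq_gt0 MM MM hM hM)| exact: divr_gt0].
  by rewrite divr_ge0 ?S1_ge0 // ltW.
have : \forall z \near y, Nb z.
  by apply: open_nbhs_nbhs; split => //; exact: ball_open.
apply: filterS => z Nz; exact: hh_lip.
Qed.

Lemma hh_sol y : Nb y -> 0 < hh y /\ G (hh y) y = cc.
Proof. by move=> Ny; have [? _ ?] := hh_prop y Ny. Qed.

Lemma hh_Q y a b : Nb y -> 0 <= a -> 0 <= b -> 0 < Q a b y.
Proof. exact: Nb_Qpos. Qed.

Lemma hh_der y v : Nb y ->
  derivable hh y v /\ derive hh y v = G (hh y) v / Q (hh y) (hh y) y.
Proof.
move=> Ny; apply: (h_deriv _ _ _ _ _ _ lam0 gam0 s01 Nb hh cc (ball_open _ _) hh_sol hh_Q y v Ny).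
exact: (cvg_comp _ _ (@line_cvg R _ y v) (hh_cont y Ny)).
Qed.

Lemma hh_C1 : C1_on hh Nb.
Proof.
move=> j; split; first by move=> y Ny; have [] := hh_der y (ev R j) Ny.
rewrite continuous_open_subspace; last exact: ball_open.
move=> y /set_mem Ny.
have NN : \forall z \near y, Nb z.
  by apply: open_nbhs_nbhs; split => //; exact: ball_open.
have e : \forall z \near y, G (hh z) (ev R j) / Q (hh z) (hh z) z = derive hh z (ev R j).
  by apply: filterS NN => z Nz; have [_ ->] := hh_der z (ev R j) Nz.
rewrite /continuous_at.
apply: cvg_trans (near_eq_cvg e) _.
have [_ ->] := hh_der y (ev R j) Ny.
have [hy0 _] := hh_sol y Ny.
have hc := hh_cont y Ny.
apply: cvgM.
  exact: (L_cvg _ _ _ _ _ _ lam0 gam0 s01 (nbhs y) hh (fun=> ev R j) (hh y) (ev R j) hc (cvg_cst _) (ltW hy0)).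
apply: cvgV; first by rewrite gt_eqF // hh_Q // ltW.
exact: (Q_cvg _ _ _ _ _ _ lam0 gam0 s01 (nbhs y) hh hh id (hh y) (hh y) y hc hc cvg_id (ltW hy0) (ltW hy0)).
Qed.

End Exist.

End H2.
Import H2.

Module I2.
Set Implicit Arguments. Unset Strict Implicit. Unset Printing Implicit Defensive.

Lemma xc_ev (R : realType) (D : nat) (nn : 'I_D -> nat) (c d : 'I_D) (l : 'I_(nn c)) (i : 'I_(nn d)) :
  xc (ev R (pos l)) i = (pos i == pos l)%:R.
Proof. by rewrite /xc /ev mxE /=. Qed.

Lemma pos_eq (D : nat) (nn : 'I_D -> nat) (c d : 'I_D) (l : 'I_(nn c)) (i : 'I_(nn d)) :
  pos i = pos l -> Tagged (fun d => 'I_(nn d)) i = Tagged (fun d => 'I_(nn d)) l.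
Proof. by move/enum_rank_inj. Qed.

Lemma S_ev (R : realType) (D : nat) (nn : 'I_D -> nat) (c : 'I_D) (l : 'I_(nn c)) (w : wt R nn) :
  S (ev R (pos l)) w = deg R c * w c l.
Proof.
rewrite /S (bigD1 c) //=.
have -> : \sum_(d < D | d != c) deg R d * \sum_(i < nn d) (xc (ev R (pos l)) i * w d i) = 0.
  apply: big1 => d dc; have -> : \sum_(i < nn d) (xc (ev R (pos l)) i * w d i) = 0.
    apply: big1 => i _; rewrite xc_ev.
    case: eqP => [/pos_eq e|_]; last by rewrite mul0r.
    by have /= ec := congr1 tag e; rewrite ec eqxx in dc.
  by rewrite mulr0.
rewrite addr0; congr (_ * _); rewrite (bigD1 l) //=.
have -> : \sum_(i < nn c | i != l) (xc (ev R (pos l)) i * w c i) = 0.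
  apply: big1 => i il; rewrite xc_ev; case: eqP => [/pos_eq e|_]; last by rewrite mul0r.
  have : Tagged (fun d => 'I_(nn d)) i == Tagged (fun d => 'I_(nn d)) l by rewrite e.
  by rewrite eq_Tagged /= (negbTE il).
by rewrite addr0 xc_ev eqxx mul1r.
Qed.


Lemma mono_frac (R : realType) (t1 t2 T g : R) : 0 <= t1 -> t1 <= t2 -> 0 <= T -> 0 < g ->
  t1 / (g + t1 * T) <= t2 / (g + t2 * T).
Proof.
move=> t10 t12 T0 g0.
have h1 : 0 < g + t1 * T by rewrite ltr_pwDl // mulr_ge0.
have h2 : 0 < g + t2 * T by rewrite ltr_pwDl // mulr_ge0 // (le_trans t10).
rewrite ler_pdivrMr // mulrAC ler_pdivlMr //.
nra.
Qed.

End I2.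
Import I2.

Unset Implicit Arguments.

Theorem theorem4 (R : realType) (D : nat) (nn : 'I_D -> nat) (m : 'I_D -> R)
  (s : forall d, 'I_(nn d) -> R) (lam gam r : R)
  (xs : 'rV[R]_(nS nn)) (Ths : R) :
  (forall d, 0 < m d <= 1) -> \sum_d m d = 1 ->
  (forall d (i : 'I_(nn d)), 0 <= s d i <= 1) ->
  (forall d (i j : 'I_(nn d)), (i < j)%N -> s d i < s d j) ->
  0 < lam -> 0 < gam -> r < 0 ->
  (forall d (i : 'I_(nn d)), gam < theta lam s i) ->
  social_state m xs ->
  (* Ths = \bar Theta(xs): the unique positive root of H(., xs) *)
  0 < Ths -> Hfun m s lam gam Ths xs = 0 ->
  (* dH/dTheta (Ths, xs) < 0 *)
  (exists dH : R, is_derive Ths 1 (fun t => Hfun m s lam gam t xs) dH /\ dH < 0) /\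
  (* existence of the implicit function *)
  (exists N h, implicit_sol m s lam gam xs Ths N h) /\
  (* its uniqueness (any two such functions agree near xs) *)
  (forall N h N' h', implicit_sol m s lam gam xs Ths N h ->
     implicit_sol m s lam gam xs Ths N' h' -> \forall y \near xs, h' y = h y) /\
  (* submodularity at xs *)
  (forall N h, implicit_sol m s lam gam xs Ths N h ->
   forall (d c : 'I_D) (k k' : 'I_(nn d)) (l l' : 'I_(nn c)),
     nat_of_ord k' = (nat_of_ord k).+1 -> nat_of_ord l' = (nat_of_ord l).+1 ->
     derive (Fpay s lam gam r h k') xs (ev R (pos l'))
     - derive (Fpay s lam gam r h k) xs (ev R (pos l'))
     - derive (Fpay s lam gam r h k') xs (ev R (pos l))
     + derive (Fpay s lam gam r h k) xs (ev R (pos l)) <= 0).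
Proof.
move=> hm hsum hs hmono lam0 gam0 r0 hth [xs0 xsum] Ths0 hH.
have [d0 _] : exists d0 : 'I_D, True.
  case: (pickP (fun _ : 'I_D => true)) => [d _|h]; first by exists d.
  have : \sum_d m d = 0 by apply: big1 => d _; have := h d.
  by rewrite hsum => /eqP; rewrite oner_eq0.
have [i0 hi0] : exists i0 : 'I_(nn d0), 0 < xc xs i0.
  apply: contrapT => hn.
  have hle : forall i : 'I_(nn d0), xc xs i <= 0.
    by move=> i; rewrite leNgt; apply/negP => hi; apply: hn; exists i.
  have : \sum_(i < nn d0) xc xs i <= 0 by apply: sumr_le0 => i _; exact: hle.
  rewrite xsum; case/andP: (hm d0) => h1 _ h2; lra.
have ht0 : 0 < theta lam s i0 := lt_trans gam0 (hth d0 i0).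
set c := dbar m.
have cpos : 0 < c.
  rewrite /c /dbar (bigD1 d0) //=.
  have h1 : 0 <= \sum_(d < D | d != d0) deg R d * m d.
    apply: sumr_ge0 => d _; apply: mulr_ge0; first exact: ltW (deg_gt0 _ d).
    by case/andP: (hm d) => /ltW.
  have h2 : 0 < deg R d0 * m d0.
    by apply: mulr_gt0; [exact: deg_gt0 | case/andP: (hm d0)].
  lra.
have Hiff : forall T y, Hfun m s lam gam T y = 0 <-> G s lam gam T y = c.
  move=> T y; rewrite Hfun_eq; split => [e|->]; last by rewrite mulVf ?gt_eqF // subrr.
  move/eqP: e; rewrite subr_eq0 => /eqP e.
  have -> : G s lam gam T y = c * (c^-1 * G s lam gam T y) by rewrite mulrA mulfV ?gt_eqF // mul1r.
  by rewrite e mulr1.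
have hG : G s lam gam Ths xs = c by apply/Hiff.
have Nxs := Nb_xs _ _ _ _ _ _ lam0 gam0 hs xs d0 i0 Ths hi0 ht0 Ths0.
have Q0p : 0 < Q s lam gam Ths Ths xs.
  exact: (Nb_Qpos _ _ _ _ _ _ lam0 gam0 hs xs d0 i0 Ths xs0 hi0 ht0 xs Ths Ths Nxs (ltW Ths0) (ltW Ths0)).
split.
  exists (- c^-1 * Q s lam gam Ths Ths xs); split; last first.
    by rewrite mulNr oppr_lt0 mulr_gt0 // invr_gt0.
  have Nl : \forall t \near (0:R)^', 0 < t *: (1:R) + Ths.
    have := @line_cvg R R Ths 1; move/(_ [set x | 0 < x]); apply.
    by apply: open_nbhs_nbhs; split => //; exact: open_gt.
  have hq : \forall t \near (0:R)^', t^-1 *: (((fun t => Hfun m s lam gam t xs) \o shift Ths) (t *: (1:R))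
      - Hfun m s lam gam Ths xs) = - c^-1 * Q s lam gam (t *: (1:R) + Ths) Ths xs.
    near=> t.
    have t0 : t != 0 by exact: (near (nbhs_dnbhs_neq 0) t).
    have z0 : 0 < t *: (1:R) + Ths by exact: (near Nl t).
    have e := G_diff lam0 gam0 hs xs (ltW z0) (ltW Ths0).
    rewrite /= /shift !Hfun_eq.
    have -> : c^-1 * G s lam gam (t *: 1 + Ths) xs - 1 - (c^-1 * G s lam gam Ths xs - 1) =
      c^-1 * (G s lam gam (t *: 1 + Ths) xs - G s lam gam Ths xs) by ring.
    rewrite e.
    have sm : forall a b : R, a *: b = a * b by [].
    rewrite !sm mulr1.
    field.
    by rewrite t0 gt_eqF.
  have hcv : (fun t : R => - c^-1 * Q s lam gam (t *: (1:R) + Ths) Ths xs) @ 0^' -->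
      - c^-1 * Q s lam gam Ths Ths xs.
    apply: cvgM; first exact: cvg_cst.
    apply: (Q_cvg _ _ _ _ _ _ lam0 gam0 hs (0:R)^' (fun t : R => t *: (1:R) + Ths) (fun=> Ths) (fun=> xs)
      Ths Ths xs (@line_cvg R R Ths 1) (cvg_cst _) (cvg_cst _) (ltW Ths0) (ltW Ths0)).
  have [hd hv] := deriv_quot hq hcv.
  by constructor.
set NB := Nb R D nn s lam gam xs d0 i0 Ths.
have oNB : open NB by exact: ball_open.
have cc_eq : cc R D nn s lam gam xs Ths = c by [].
split.
  exists NB, (hh R D nn s lam gam xs Ths); split => //.
  - exact: (hh_C1 _ _ _ _ _ _ lam0 gam0 hs xs d0 i0 Ths xs0 hi0 ht0 Ths0).
  - exact: (hh_xs _ _ _ _ _ _ lam0 gam0 hs xs d0 i0 Ths xs0 hi0 ht0 Ths0).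
  - move=> y Ny; have [h0 he] := hh_sol _ _ _ _ _ _ lam0 gam0 hs xs d0 i0 Ths xs0 hi0 ht0 Ths0 y Ny.
    by split => //; apply/Hiff; rewrite he.
split.
  move=> N h N' h' [oN Nx _ _ hN] [oN' Nx' _ _ hN'].
  have n1 : \forall y \near xs, N y by apply: open_nbhs_nbhs; split.
  have n2 : \forall y \near xs, N' y by apply: open_nbhs_nbhs; split.
  have n3 : \forall y \near xs, NB y by apply: open_nbhs_nbhs; split.
  near=> y.
  have Ny : N y by exact: (near n1 y).
  have Ny' : N' y by exact: (near n2 y).
  have NBy : NB y by exact: (near n3 y).
  have [h0 /Hiff e] := hN y Ny; have [h0' /Hiff e'] := hN' y Ny'.
  apply: (Nb_uniq _ _ _ _ _ _ lam0 gam0 hs xs d0 i0 Ths xs0 hi0 ht0 y (h' y) (h y) NBy (ltW h0') (ltW h0)).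
  by rewrite e e'.
move=> N h [oN Nx C1 hx hN] d c' k k' l l' ek el.
set N2 := N `&` NB.
have oN2 : open N2 by exact: openI.
have N2x : N2 xs by split.
have hN2 : forall y, N2 y -> 0 < h y /\ G s lam gam (h y) y = c.
  by move=> y [Ny _]; have [h0 /Hiff e] := hN y Ny.
have QN2 : forall y a b, N2 y -> 0 <= a -> 0 <= b -> 0 < Q s lam gam a b y.
  move=> y a b [_ NBy] a0 b0.
  exact: (Nb_Qpos _ _ _ _ _ _ lam0 gam0 hs xs d0 i0 Ths xs0 hi0 ht0 y a b NBy a0 b0).
have hpos : forall z, N z -> 0 <= h z by move=> z Nz; have [h0 _] := hN z Nz; exact: ltW.
set E := fun (kk : 'I_(nn d)) => gam + theta lam s kk * Ths.
set A := fun (kk : 'I_(nn d)) => (1 - s d kk) *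
   (theta lam s kk * gam * ((gam + theta lam s kk * Ths)^-1 * (gam + theta lam s kk * Ths)^-1)).
set B := fun (ll : 'I_(nn c')) => deg R c' * wG s lam gam Ths ll / Q s lam gam Ths Ths xs.
have derF : forall (kk : 'I_(nn d)) (ll : 'I_(nn c')),
    derive (Fpay s lam gam r h kk) xs (ev R (pos ll)) = - A kk * B ll.
  move=> kk ll.
  have hd := (C1 (pos ll)).1 xs Nx.
  rewrite (F_deriv _ _ _ _ _ _ r lam0 gam0 hs N h oN hpos xs (ev R (pos ll)) Nx hd d kk) hx.
  have [_ ->] := h_deriv _ _ _ _ _ _ lam0 gam0 hs N2 h c oN2 hN2 QN2 xs (ev R (pos ll)) N2x
    (deriv_line hd).
  by rewrite hx /B2.G S_ev /A /B mulNr.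
rewrite !derF.
have thm : forall (dd : 'I_D) (a b : 'I_(nn dd)), nat_of_ord b = (nat_of_ord a).+1 ->
    theta lam s b <= theta lam s a.
  move=> dd a b eab; rewrite /theta; apply: ler_wpM2l.
    by apply: mulr_ge0; [exact: ltW | exact: ltW (deg_gt0 _ dd)].
  rewrite lerD2l lerN2; apply: ltW; apply: hmono; by rewrite eab.
have wm : forall (dd : 'I_D) (a b : 'I_(nn dd)), nat_of_ord b = (nat_of_ord a).+1 ->
    wG s lam gam Ths b <= wG s lam gam Ths a.
  move=> dd a b eab; apply: mono_frac => //; last exact: ltW.
    exact: (th_ge0 lam0 hs).
  exact: thm.
have w0 : forall (dd : 'I_D) (a : 'I_(nn dd)), 0 <= wG s lam gam Ths a.
  move=> dd a; apply: divr_ge0; first exact: (th_ge0 lam0 hs).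
  exact: ltW (den_gt0 lam0 gam0 hs a (ltW Ths0)).
have eA : forall kk, A kk = gam / (lam * deg R d) * (wG s lam gam Ths kk * wG s lam gam Ths kk).
  move=> kk; have hE := den_gt0 lam0 gam0 hs kk (ltW Ths0).
  have dg := deg_gt0 R d.
  rewrite /A /B2.wG; rewrite /theta in hE *.
  rewrite /deg -natr1 addrC in hE dg *.
  field.
  by rewrite !gt_eqF.
have hA : A k' <= A k.
  rewrite !eA; apply: ler_wpM2l.
    apply: divr_ge0; first exact: ltW.
    by apply: mulr_ge0; [exact: ltW | exact: ltW (deg_gt0 _ d)].
  by apply: ler_pM; [exact: w0 | exact: w0 | exact: wm | exact: wm].
have hB : B l' <= B l.
  rewrite /B; apply: ler_wpM2r; first by rewrite invr_ge0 ltW.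
  apply: ler_wpM2l; first exact: ltW (deg_gt0 _ c').
  exact: wm.
have hp : 0 <= (A k' - A k) * (B l' - B l) by apply: mulr_le0; rewrite subr_le0.
nra.
Unshelve. all: by end_near.
Qed.
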